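(* There is no left commutative T2R semigroup, i.e. no T2R semigroup satisfies the identity $xya=yxa$ for all $x,y,a$.
   Context: A semigroup $S$ is a $\Delta$-semigroup if the lattice of all congruences of $S$ is a chain with respect to inclusion. A semigroup $N$ with zero $0$ is nil if every element has some power equal to $0$; non-trivial means having more than one element. A T2R semigroup is a $\Delta$-semigroup $S$ which is the disjoint union of a non-trivial nil ideal $S_0$ (with zero $0$, which is then the zero of $S$) and a subsemigroup $S_1=\{u,v\}$, $u\neq v$, which is a right zero semigroup ($xy=y$ for $x,y\in S_1$). *)

(* Defs.v *)
From Stdlib Require Import Classical.

Definition associative_op {S : Type} (op : S -> S -> S) : Prop :=
  forall x y z, op x (op y z) = op (op x y) z.

Definition is_congruence {S : Type} (op : S -> S -> S) (R : S -> S -> Prop) : Prop :=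
  (forall x, R x x) /\
  (forall x y, R x y -> R y x) /\
  (forall x y z, R x y -> R y z -> R x z) /\
  (forall x y c, R x y -> R (op c x) (op c y) /\ R (op x c) (op y c)).

Definition is_Delta_semigroup {S : Type} (op : S -> S -> S) : Prop :=
  associative_op op /\
  forall R1 R2, is_congruence op R1 -> is_congruence op R2 ->
    (forall x y, R1 x y -> R2 x y) \/ (forall x y, R2 x y -> R1 x y).

(* spow op x n = x^(n+1) *)
Fixpoint spow {S : Type} (op : S -> S -> S) (x : S) (n : nat) : S :=
  match n with
  | O => x
  | Datatypes.S m => op x (spow op x m)
  end.

Definition is_T2R {S : Type} (op : S -> S -> S) : Prop :=
  is_Delta_semigroup op /\
  exists (S0 : S -> Prop) (z u v : S),
    u <> v /\
    (forall x, S0 x <-> (x <> u /\ x <> v)) /\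
    (forall x s, S0 s -> S0 (op x s) /\ S0 (op s x)) /\
    S0 z /\ (forall x, S0 x -> op z x = z /\ op x z = z) /\
    (forall x, S0 x -> exists n, spow op x n = z) /\
    (exists x, S0 x /\ x <> z) /\
    op u u = u /\ op u v = v /\ op v u = u /\ op v v = v.

Definition left_commutative_sg {S : Type} (op : S -> S -> S) : Prop :=
  forall x y a, op (op x y) a = op (op y x) a.

(* Main.v *)
Require Import Defs.
From Stdlib Require Import Classical.

Theorem mainTheorem10 (S : Type) (op : S -> S -> S) :
  is_T2R op -> ~ left_commutative_sg op.
Proof.
  intros [[Hassoc Hchain] HT] Hlc.
  destruct HT as (S0 & z & u & v & Huv & HS0 & Hid & Hz & Hzz & _ & (x0 & Hx0 & Hx0z) & Huu & Hu_v & Hvu & Hvv).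
  assert (Hvu_eq : forall a, op v a = op u a).
  { intro a. pose proof (Hlc u v a) as E. rewrite Hu_v, Hvu in E. exact E. }
  set (rho := fun x y => x = y \/ (S0 x /\ S0 y)).
  assert (Crho : is_congruence op rho).
  { unfold rho; split; [|split; [|split]].
    - left; reflexivity.
    - intros x y [H|[H1 H2]]; [left; auto|right; auto].
    - intros x y w H1 H2; destruct H1 as [->|[A B]]; destruct H2 as [->|[C D]]; auto.
    - intros x y c [H|[H1 H2]].
      + subst; split; left; reflexivity.
      + split; right; split; first [apply (proj1 (Hid _ _ H1)) | apply (proj1 (Hid _ _ H2)) | apply (proj2 (Hid _ _ H1)) | apply (proj2 (Hid _ _ H2))]. }
  set (sig := fun x y => forall a, op x a = op y a).
  assert (Csig : is_congruence op sig).
  { unfold sig; split; [|split; [|split]].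
    - reflexivity.
    - intros; symmetry; auto.
    - intros x y w H1 H2 a; rewrite H1; auto.
    - intros x y c H; split; intro a.
      + rewrite <- !Hassoc, H; reflexivity.
      + rewrite <- !Hassoc; apply H. }
  assert (HS0u : ~ S0 u) by (intro H; apply HS0 in H; tauto).
  assert (HS0v : ~ S0 v) by (intro H; apply HS0 in H; tauto).
  assert (Hzero : forall c a, S0 c -> op c a = z).
  { intros c a Hc.
    destruct (Hchain sig rho Csig Crho) as [H|H].
    - exfalso. destruct (H u v (fun a => eq_sym (Hvu_eq a))) as [E|[E _]]; auto.
    - assert (E : sig c z) by (apply H; right; auto).
      rewrite (E a).
      assert (Hza : S0 (op z a)) by (apply (proj2 (Hid a z Hz))).
      transitivity (op z (op z a));
        [rewrite Hassoc, (proj1 (Hzz _ Hz)); reflexivity | apply (proj1 (Hzz _ Hza))]. }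
  set (tau := fun x y => x = y \/ (x = u /\ y = v) \/ (x = v /\ y = u)).
  assert (Ctau : is_congruence op tau).
  { unfold tau; split; [|split; [|split]].
    - left; reflexivity.
    - intros x y [H|[[H1 H2]|[H1 H2]]]; subst; auto.
    - intros x y w [H|[[H1 H2]|[H1 H2]]] [H'|[[H1' H2']|[H1' H2']]]; subst; auto;
        try congruence.
    - assert (Hc : forall c, op c u = op c v \/ (op c u = u /\ op c v = v)
                   \/ (op c u = v /\ op c v = u) ).
      { intro c. destruct (classic (c = u)) as [->|Hcu]; [right; left; auto|].
        destruct (classic (c = v)) as [->|Hcv]; [right; left; auto|].
        left. assert (S0 c) by (apply HS0; auto).
        rewrite !Hzero; auto. }
      intros x y c [H|[[H1 H2]|[H1 H2]]]; subst.
      + split; left; reflexivity.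
      + split; [destruct (Hc c) as [E|[[E1 E2]|[E1 E2]]]; rewrite ?E, ?E1, ?E2; auto
               | left; symmetry; apply Hvu_eq].
      + split; [destruct (Hc c) as [E|[[E1 E2]|[E1 E2]]]; rewrite ?E, ?E1, ?E2; auto
               | left; apply Hvu_eq]. }
  destruct (Hchain tau rho Ctau Crho) as [H|H].
  - destruct (H u v (or_intror (or_introl (conj eq_refl eq_refl)))) as [E|[E _]]; auto.
  - destruct (H x0 z (or_intror (conj Hx0 Hz))) as [E|[[E1 E2]|[E1 E2]]]; auto.
    + subst; apply HS0u; auto.
    + subst; apply HS0v; auto.
Qed.
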